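(* Let $\mathbf U$ be a real $3\times3$ positive-definite symmetric matrix, $|\hat{\mathbf e}|=1$, $\hat{\mathbf U}=(-\mathbf I+2\hat{\mathbf e}\otimes\hat{\mathbf e})\mathbf U(-\mathbf I+2\hat{\mathbf e}\otimes\hat{\mathbf e})$, and let $\hat{\mathbf R}\in\mathrm{SO}(3)$, nonzero $\mathbf a,\mathbf n\in\mathbb R^3$ satisfy $\hat{\mathbf R}\hat{\mathbf U}=\mathbf U+\mathbf a\otimes\mathbf n$. Consider the conditions (CC1) the middle eigenvalue $\lambda_2$ of $\mathbf U$ equals $1$; (CC2) $\mathbf a\cdot\mathbf U\,\mathrm{cof}(\mathbf U^2-\mathbf I)\mathbf n=0$; (CC2') $(\mathbf a\cdot\hat{\mathbf v}_2)(\mathbf n\cdot\hat{\mathbf v}_2)=0$, where $\hat{\mathbf v}_2$ is a normalized eigenvector of $\mathbf U$ corresponding to its middle eigenvalue; (CC3) $\mathrm{tr}\,\mathbf U^2-\det\mathbf U^2-\frac{|\mathbf a|^2|\mathbf n|^2}{4}-2\ge0$. Then (CC1), (CC2), (CC3) hold if and only if (CC1), (CC2'), (CC3) hold.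
   Context: $\mathbf a\otimes\mathbf n$ is the matrix $\mathbf x\mapsto(\mathbf n\cdot\mathbf x)\mathbf a$; $\mathrm{cof}\,\mathbf A$ is the cofactor matrix, $(\mathrm{cof}\,\mathbf A)_{ij}=(-1)^{i+j}\det$ of the submatrix obtained by deleting row $i$ and column $j$. *)

(* Defs.v *)
From HB Require Import structures.
From mathcomp Require Import all_boot all_order all_algebra.
From mathcomp Require Import reals.
Set Implicit Arguments. Unset Strict Implicit. Unset Printing Implicit Defensive.
Import Order.TTheory GRing.Theory Num.Theory.
Local Open Scope ring_scope.

Section Defs.
Variable R : realType.

Definition dotv (u v : 'cV[R]_3) : R := (u^T *m v) 0 0.

Definition tens (a n : 'cV[R]_3) : 'M[R]_3 := a *m n^T.

Definition cofm (A : 'M[R]_3) : 'M[R]_3 := \matrix_(i, j) cofactor A i j.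

Definition sym_posdef (U : 'M[R]_3) : Prop :=
  U^T = U /\ forall x : 'cV[R]_3, x != 0 -> 0 < dotv x (U *m x).

Definition SO3 (Q : 'M[R]_3) : Prop := Q^T *m Q = 1 /\ \det Q = 1.

(* l is the middle eigenvalue of U: the median of the roots of the
   characteristic polynomial, counted with multiplicity *)
Definition middle_eigenvalue (U : 'M[R]_3) (l : R) : Prop :=
  exists l1 l3 : R, l1 <= l <= l3 /\
    char_poly U = ('X - l1%:P) * ('X - l%:P) * ('X - l3%:P).

Definition CC1 (U : 'M[R]_3) : Prop := middle_eigenvalue U 1.

Definition CC2 (U : 'M[R]_3) (a n : 'cV[R]_3) : Prop :=
  dotv a (U *m cofm (U *m U - 1) *m n) = 0.

Definition CC2' (U : 'M[R]_3) (a n : 'cV[R]_3) : Prop :=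
  exists (l2 : R) (v2 : 'cV[R]_3),
    middle_eigenvalue U l2 /\ dotv v2 v2 = 1 /\ U *m v2 = l2 *: v2 /\
    dotv a v2 * dotv n v2 = 0.

Definition CC3 (U : 'M[R]_3) (a n : 'cV[R]_3) : Prop :=
  0 <= \tr (U *m U) - \det (U *m U) - dotv a a * dotv n n / 4%:R - 2%:R.

End Defs.

(* Main.v *)
Require Import Defs.
From HB Require Import structures.
From mathcomp Require Import all_boot all_order all_algebra.
From mathcomp Require Import reals ring lra.
Import Order.TTheory GRing.Theory Num.Theory.
Local Open Scope ring_scope.

Section Helpers.
Set Implicit Arguments. Unset Strict Implicit.
Variable R : realType.

Lemma sum3 (f : 'I_3 -> R) : \sum_(i < 3) f i = f 0 + f 1 + f 2.
Proof. rewrite !big_ord_recr big_ord0 /= add0r. congr (_ + _ + _); congr f; exact: val_inj. Qed.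
Lemma sum2 (f : 'I_2 -> R) : \sum_(i < 2) f i = f 0 + f 1.
Proof. rewrite !big_ord_recr big_ord0 /= add0r. congr (_ + _); congr f; exact: val_inj. Qed.
Lemma det2 (A : 'M[R]_2) : \det A = A 0 0 * A 1 1 - A 0 1 * A 1 0.
Proof.
rewrite (expand_det_row _ 0) sum2 /cofactor !det_mx11 !mxE /=.
rewrite !expr0 expr1 !mul1r.
have -> : lift 0 (0:'I_1) = 1 :> 'I_2 by exact: val_inj.
have -> : lift 1 (0:'I_1) = 0 :> 'I_2 by exact: val_inj.
ring.
Qed.
Lemma l00 : lift (0:'I_3) (0:'I_2) = 1. Proof. exact: val_inj. Qed.
Lemma l01 : lift (0:'I_3) (1:'I_2) = 2. Proof. exact: val_inj. Qed.
Lemma l10 : lift (1:'I_3) (0:'I_2) = 0. Proof. exact: val_inj. Qed.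
Lemma l11 : lift (1:'I_3) (1:'I_2) = 2. Proof. exact: val_inj. Qed.
Lemma l20 : lift (2:'I_3) (0:'I_2) = 0. Proof. exact: val_inj. Qed.
Lemma l21 : lift (2:'I_3) (1:'I_2) = 1. Proof. exact: val_inj. Qed.
Ltac cofE := rewrite /cofactor det2 !mxE ?l00 ?l01 ?l10 ?l11 ?l20 ?l21 /=; ring.
Lemma c00 (A : 'M[R]_3) : cofactor A 0 0 = A 1 1 * A 2 2 - A 1 2 * A 2 1. Proof. cofE. Qed.
Lemma c01 (A : 'M[R]_3) : cofactor A 0 1 = A 1 2 * A 2 0 - A 1 0 * A 2 2. Proof. cofE. Qed.
Lemma c02 (A : 'M[R]_3) : cofactor A 0 2 = A 1 0 * A 2 1 - A 1 1 * A 2 0. Proof. cofE. Qed.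
Lemma c10 (A : 'M[R]_3) : cofactor A 1 0 = A 0 2 * A 2 1 - A 0 1 * A 2 2. Proof. cofE. Qed.
Lemma c11 (A : 'M[R]_3) : cofactor A 1 1 = A 0 0 * A 2 2 - A 0 2 * A 2 0. Proof. cofE. Qed.
Lemma c12 (A : 'M[R]_3) : cofactor A 1 2 = A 0 1 * A 2 0 - A 0 0 * A 2 1. Proof. cofE. Qed.
Lemma c20 (A : 'M[R]_3) : cofactor A 2 0 = A 0 1 * A 1 2 - A 0 2 * A 1 1. Proof. cofE. Qed.
Lemma c21 (A : 'M[R]_3) : cofactor A 2 1 = A 0 2 * A 1 0 - A 0 0 * A 1 2. Proof. cofE. Qed.
Lemma c22 (A : 'M[R]_3) : cofactor A 2 2 = A 0 0 * A 1 1 - A 0 1 * A 1 0. Proof. cofE. Qed.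
Lemma det3 (A : 'M[R]_3) : \det A = A 0 0 * (A 1 1 * A 2 2 - A 1 2 * A 2 1)
  + A 0 1 * (A 1 2 * A 2 0 - A 1 0 * A 2 2) + A 0 2 * (A 1 0 * A 2 1 - A 1 1 * A 2 0).
Proof. by rewrite (expand_det_row _ 0) sum3 c00 c01 c02. Qed.
Lemma ord3 (i : 'I_3) : i = 0 \/ i = 1 \/ i = 2.
Proof. case: i => [[|[|[|//]]] Hi]; [left|right;left|right;right]; exact: val_inj. Qed.
Lemma mulmx3 (A B : 'M[R]_3) i j : (A *m B) i j = A i 0 * B 0 j + A i 1 * B 1 j + A i 2 * B 2 j.
Proof. by rewrite mxE sum3. Qed.
Lemma mulmxv (A : 'M[R]_3) (v : 'cV[R]_3) i : (A *m v) i 0 = A i 0 * v 0 0 + A i 1 * v 1 0 + A i 2 * v 2 0.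
Proof. by rewrite mxE sum3. Qed.
Lemma dotvE (u v : 'cV[R]_3) : dotv u v = u 0 0 * v 0 0 + u 1 0 * v 1 0 + u 2 0 * v 2 0.
Proof. by rewrite /dotv mxE sum3 !mxE. Qed.
Lemma dotvC (u v : 'cV[R]_3) : dotv u v = dotv v u.
Proof. rewrite !dotvE; ring. Qed.

Lemma crossR (p0 p1 p2 q0 q1 q2 v0 v1 v2 : R) :
  p0*v0 + p1*v1 + p2*v2 = 0 -> q0*v0 + q1*v1 + q2*v2 = 0 -> v0*v0 + v1*v1 + v2*v2 = 1 ->
  exists K, [/\ p1*q2 - p2*q1 = K*v0, p2*q0 - p0*q2 = K*v1 & p0*q1 - p1*q0 = K*v2].
Proof.
move=> hp hq hv.
pose X0 := p1*q2 - p2*q1; pose X1 := p2*q0 - p0*q2; pose X2 := p0*q1 - p1*q0.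
exists (X0*v0 + X1*v1 + X2*v2); rewrite -/X0 -/X1 -/X2.
set K := (X0*v0 + X1*v1 + X2*v2).
split; apply/eqP; rewrite -subr_eq0; apply/eqP.
- transitivity (X0*(1 - (v0*v0 + v1*v1 + v2*v2)) - v1*(p2*(q0*v0 + q1*v1 + q2*v2) - q2*(p0*v0 + p1*v1 + p2*v2))
     + v2*(p1*(q0*v0 + q1*v1 + q2*v2) - q1*(p0*v0 + p1*v1 + p2*v2))).
    rewrite /K /X0 /X1 /X2. ring.
  by rewrite hp hq hv; ring.
- transitivity (X1*(1 - (v0*v0 + v1*v1 + v2*v2)) - v2*(p0*(q0*v0 + q1*v1 + q2*v2) - q0*(p0*v0 + p1*v1 + p2*v2))
     + v0*(p2*(q0*v0 + q1*v1 + q2*v2) - q2*(p0*v0 + p1*v1 + p2*v2))).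
    rewrite /K /X0 /X1 /X2; ring.
  by rewrite hp hq hv; ring.
- transitivity (X2*(1 - (v0*v0 + v1*v1 + v2*v2)) - v0*(p1*(q0*v0 + q1*v1 + q2*v2) - q1*(p0*v0 + p1*v1 + p2*v2))
     + v1*(p0*(q0*v0 + q1*v1 + q2*v2) - q0*(p0*v0 + p1*v1 + p2*v2))).
    rewrite /K /X0 /X1 /X2; ring.
  by rewrite hp hq hv; ring.
Qed.

Lemma keyR (m00 m01 m02 m11 m12 m22 v0 v1 v2 : R) :
  m00*v0 + m01*v1 + m02*v2 = 0 -> m01*v0 + m11*v1 + m12*v2 = 0 ->
  m02*v0 + m12*v1 + m22*v2 = 0 -> v0*v0 + v1*v1 + v2*v2 = 1 ->
  forall S : R, S = (m11* m22 - m12* m12) + (m00* m22 - m02* m02) + (m00* m11 - m01* m01) ->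
  [/\ m11* m22 - m12* m12 = S*(v0*v0), m12* m02 - m01* m22 = S*(v0*v1) &
      m01* m12 - m11* m02 = S*(v0*v2)] /\ [/\ m00* m22 - m02* m02 = S*(v1*v1),
      m01* m02 - m00* m12 = S*(v1*v2) & m00* m11 - m01* m01 = S*(v2*v2)].
Proof.
move=> h0 h1 h2 hv S hS.
have [k0 [a0 a1 a2]] := crossR h1 h2 hv.
have [k1 [b0 b1 b2]] := crossR h2 h0 hv.
have [k2 [c0 c1 c2]] := crossR h0 h1 hv.
have E01 : k0*v1 - k1*v0 = 0 by lra.
have E02 : k0*v2 - k2*v0 = 0 by lra.
have E12 : k1*v2 - k2*v1 = 0 by lra.
set K := k0*v0 + k1*v1 + k2*v2.
have kk0 : k0 = v0*K.
  apply/eqP; rewrite -subr_eq0; apply/eqP.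
  transitivity (k0*(1 - (v0*v0 + v1*v1 + v2*v2)) + v1*(k0*v1 - k1*v0) + v2*(k0*v2 - k2*v0)).
    rewrite /K; ring.
  by rewrite hv E01 E02; ring.
have kk1 : k1 = v1*K.
  apply/eqP; rewrite -subr_eq0; apply/eqP.
  transitivity (k1*(1 - (v0*v0 + v1*v1 + v2*v2)) - v0*(k0*v1 - k1*v0) + v2*(k1*v2 - k2*v1)).
    rewrite /K; ring.
  by rewrite hv E01 E12; ring.
have kk2 : k2 = v2*K.
  apply/eqP; rewrite -subr_eq0; apply/eqP.
  transitivity (k2*(1 - (v0*v0 + v1*v1 + v2*v2)) - v0*(k0*v2 - k2*v0) - v1*(k1*v2 - k2*v1)).
    rewrite /K; ring.
  by rewrite hv E02 E12; ring.
have hSK : S = K by rewrite hS /K; lra.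
rewrite hSK; clearbody K.
rewrite kk0 in a0 a1 a2; rewrite kk1 in b0 b1 b2; rewrite kk2 in c0 c1 c2.
by split; split; lra.
Qed.

Lemma keyM (M : 'M[R]_3) (v : 'cV[R]_3) : M^T = M -> M *m v = 0 -> dotv v v = 1 ->
  cofm M = (cofactor M 0 0 + cofactor M 1 1 + cofactor M 2 2) *: (v *m v^T).
Proof.
move=> hM hMv hv.
have S i j : M j i = M i j by rewrite -[in LHS]hM mxE.
have h i : (M *m v) i 0 = 0 by rewrite hMv mxE.
have h0 := h 0; have h1 := h 1; have h2 := h 2.
rewrite !mulmxv in h0 h1 h2; rewrite dotvE in hv.
rewrite (S 0 1) (S 0 2) (S 1 2) in h1 h2.
have := keyR h0 h1 h2 hv (erefl _) => -[[e00 e01 e02] [e11 e12 e22]].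
apply/matrixP => i j; rewrite !mxE big_ord1 !mxE.
case: (ord3 i) => [->|[->|->]]; case: (ord3 j) => [->|[->|->]];
 rewrite ?c00 ?c01 ?c02 ?c10 ?c11 ?c12 ?c20 ?c21 ?c22 ?(S 0 1) ?(S 0 2) ?(S 1 2); lra.
Qed.

Definition sig3 (A : 'M[R]_3) := cofactor A 0 0 + cofactor A 1 1 + cofactor A 2 2.
Lemma charE (U : 'M[R]_3) x : (char_poly U).[x] = \det (x%:M - U).
Proof.
rewrite /char_poly -horner_evalE -det_map_mx; congr (\det _).
apply/matrixP => i j; rewrite !mxE /horner_eval /=.
by rewrite horner_evalE hornerD hornerN hornerMn hornerX hornerC.
Qed.
Lemma trE (A : 'M[R]_3) : \tr A = A 0 0 + A 1 1 + A 2 2.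
Proof. by rewrite /mxtrace sum3. Qed.
Lemma charU (U : 'M[R]_3) x :
  (char_poly U).[x] = x^+3 - \tr U * x^+2 + sig3 U * x - \det U.
Proof.
rewrite charE det3 det3 trE /sig3 c00 c11 c22 !mxE /=. ring.
Qed.
Lemma trUU (U : 'M[R]_3) : \tr (U *m U) = (\tr U)^+2 - 2%:R * sig3 U.
Proof. rewrite !trE !mulmx3 /sig3 c00 c11 c22. ring. Qed.
Lemma sigM (U : 'M[R]_3) : sig3 (U *m U - 1) =
  sig3 U ^+ 2 - 2%:R * \tr U * \det U - 2%:R * (\tr U)^+2 + 4%:R * sig3 U + 3%:R.
Proof. rewrite /sig3 !c00 !c11 !c22 det3 trE !mxE /= !sum3. ring. Qed.


Lemma dotpos (w : 'cV[R]_3) : w != 0 -> 0 < dotv w w.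
Proof.
move=> hw; rewrite dotvE lt_def; apply/andP; split; last by nra.
apply/negP => /eqP H0.
have h0 : w 0 0 * w 0 0 = 0 by nra.
have h1 : w 1 0 * w 1 0 = 0 by nra.
have h2 : w 2 0 * w 2 0 = 0 by nra.
move: h0 h1 h2; rewrite -!expr2 => /eqP; rewrite sqrf_eq0 => /eqP h0 /eqP; rewrite sqrf_eq0 => /eqP h1 /eqP; rewrite sqrf_eq0 => /eqP h2.
move/negP: hw; apply; apply/eqP/matrixP => i j; rewrite ord1 mxE.
by case: (ord3 i) => [->|[->|->]].
Qed.

Lemma prod3_eq0 (x y z : R) : x * y * z = 0 -> x = 0 \/ y = 0 \/ z = 0.
Proof. by move/eqP; rewrite !mulf_eq0 => /orP[/orP[/eqP|/eqP]|/eqP]; tauto. Qed.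

Lemma median_uniq (l1 l3 m1 l2 m3 : R) : l1 < 1 < l3 -> m1 <= l2 <= m3 ->
  (forall x, (x-l1)*(x-1)*(x-l3) = (x-m1)*(x-l2)*(x-m3)) -> l2 = 1.
Proof.
move=> /andP[h1 h3] /andP[g1 g3] hQ.
have e1 := hQ l2; have e2 := hQ 1.
rewrite subrr mulr0 mul0r in e1; rewrite subrr mulr0 mul0r in e2.
have {}e2 := prod3_eq0 (esym e2).
case: (prod3_eq0 e1) => [E|[E|E]].
- have {}E : l2 = l1 by lra.
  case: e2 => [F|[F|F]]; try lra.
  have e3 := hQ l3; rewrite subrr mulr0 in e3.
  have {}e3 := prod3_eq0 (esym e3); lra.
- lra.
- have {}E : l2 = l3 by lra.
  case: e2 => [F|[F|F]]; try lra.
  have e3 := hQ l1; rewrite subrr !mul0r in e3.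
  have {}e3 := prod3_eq0 (esym e3); lra.
Qed.

Lemma common (U : 'M[R]_3) (a n : 'cV[R]_3) : U^T = U -> a != 0 -> n != 0 ->
  CC1 U -> CC3 U a n ->
  exists l1 l3, [/\ l1 < 1 < l3,
    forall x, (char_poly U).[x] = (x-l1)*(x-1)*(x-l3) & sig3 (U *m U - 1) != 0].
Proof.
move=> hUs ha hn [l1 [l3 [/andP[h1 h3] hc]]] hC3.
have hP x : (char_poly U).[x] = (x-l1)*(x-1)*(x-l3) by rewrite hc !hornerE.
have hQ x := etrans (esym (charU U x)) (hP x).
set s1 := \tr U in hQ; set s2 := sig3 U in hQ; set s3 := \det U in hQ.
have q0 := hQ 0; have q1 := hQ 1; have q2 := hQ (-1).
have es3 : s3 = l1 * l3 by lra.
have es1 : s1 = l1 + 1 + l3 by lra.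
have es2 : s2 = l1 + l3 + l1 * l3 by lra.
have sE : sig3 (U *m U - 1) = (l1^+2 - 1) * (l3^+2 - 1).
  by rewrite sigM -/s1 -/s2 -/s3 es1 es2 es3; ring.
move: hC3; rewrite /CC3 trUU det_mulmx -/s1 -/s2 -/s3 es1 es2 es3 => hC3.
have qa := dotpos ha; have qn := dotpos hn.
have : 0 < dotv a a * dotv n n / 4%:R by rewrite divr_gt0 // mulr_gt0.
move: (dotv a a * dotv n n / 4%:R) hC3 => q hC3 hq.
have hs : sig3 (U *m U - 1) < 0 by rewrite sE; lra.
exists l1, l3; split => //; last by rewrite lt_eqF.
apply/andP; split; rewrite lt_neqAle ?h1 ?h3 andbT; apply/eqP => E.
- by move: hs; rewrite sE E expr1n subrr mul0r ltxx.
- by move: hs; rewrite sE -E expr1n subrr mulr0 ltxx.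
Qed.

Lemma dotv_rank1 (U : 'M[R]_3) (v a n : 'cV[R]_3) c : U *m v = v ->
  dotv a (U *m (c *: (v *m v^T)) *m n) = c * (dotv a v * dotv n v).
Proof.
move=> hv.
have -> : U *m (c *: (v *m v^T)) = c *: (v *m v^T) by rewrite -scalemxAr mulmxA hv.
rewrite !dotvE !mulmxv !mxE !big_ord1 !mxE; ring.
Qed.
End Helpers.
Unset Implicit Arguments.

Theorem corollary3 (R : realType) (U Rh : 'M[R]_3) (e a n : 'cV[R]_3) :
  sym_posdef U ->
  dotv e e = 1 ->
  SO3 Rh ->
  a != 0 -> n != 0 ->
  Rh *m ((- 1 + 2%:R *: tens e e) *m U *m (- 1 + 2%:R *: tens e e))
    = U + tens a n ->
  (CC1 U /\ CC2 U a n /\ CC3 U a n) <-> (CC1 U /\ CC2' U a n /\ CC3 U a n).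
Proof.
move=> [hUs _] he hR ha hn htw.
have hMs : (U *m U - 1)^T = U *m U - 1 by rewrite raddfB /= trmx_mul hUs trmx1.
split => -[h1 [h2 h3]]; have [l1 [l3 [hl hP hs]]] := common hUs ha hn h1 h3;
  split => //; split => //.
- have hdet : \det (1%:M - U) == 0 by rewrite -charE hP subrr mulr0 mul0r.
  have [v hv0 hvU] := det0P hdet.
  set w := v^T.
  have hw : U *m w = w.
    have E : v *m U = v by move/eqP: hvU; rewrite mulmxBr mulmx1 subr_eq0 => /eqP <-.
    by rewrite /w -{1}hUs -trmx_mul E.
  have hw0 : w != 0 by apply: contra hv0 => /eqP E; rewrite -(trmxK v) -/w E trmx0.
  have hd := dotpos hw0.
  set r := Num.sqrt (dotv w w).
  have hr2 : r ^+ 2 = dotv w w by rewrite sqr_sqrtr // ltW.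
  have hr0 : r != 0 by rewrite sqrtr_eq0 -ltNge.
  set v2 := r^-1 *: w.
  have hv2U : U *m v2 = v2 by rewrite /v2 -scalemxAr hw.
  have hv2 : dotv v2 v2 = 1.
    transitivity (r^-1 * r^-1 * dotv w w); last by rewrite -hr2; field.
    by rewrite /v2 !dotvE !mxE; ring.
  have hMv : (U *m U - 1) *m v2 = 0 by rewrite mulmxBl mul1mx -mulmxA hv2U hv2U subrr.
  exists 1, v2; split => //; split => //; split; first by rewrite scale1r.
  move: h2; rewrite /CC2 (keyM hMs hMv hv2) dotv_rank1 //.
  by move/eqP; rewrite mulf_eq0 (negbTE hs) /= => /eqP.
- case: h2 => l2 [v2 [[m1 [m3 [hm hcm]]] [hv2 [hUv hprod]]]].
  have el2 : l2 = 1.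
    by apply: (median_uniq hl hm) => x; rewrite -hP hcm !hornerE.
  rewrite el2 scale1r in hUv.
  have hMv : (U *m U - 1) *m v2 = 0 by rewrite mulmxBl mul1mx -mulmxA hUv hUv subrr.
  by rewrite /CC2 (keyM hMs hMv hv2) dotv_rank1 // hprod mulr0.
Qed.
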